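(* Suppose Assumptions 1, 2, 3 and 5 hold (but not necessarily Assumption 4), with all expectations finite. For $(g,t)\in\{0,1\}^2$ let $p_{1|gt}=P(D_{gt}=1)$ and $\Delta_{gt}=E\big(Y(1)-Y(0)\mid G=g,T=t,D(0)=1\big)$ (a term multiplied by $p_{1|10}=0$ is taken to be $0$). Then $$W_{DID}=\Delta+\frac{1}{DID_D}\Big((\Delta_{11}-\Delta_{10})\,p_{1|10}-(\Delta_{01}-\Delta_{00})\,p_{1|00}\Big).$$
   Context: Standing framework. Let $(Y(0),Y(1),V,G,T)$ be random variables on a common probability space, with $G\in\{0,1\}$ (group; $G=1$ is the ''treatment group''), $T\in\{0,1\}$ (period), $V$ real-valued, and let $(v_{gt})_{(g,t)\in\{0,1\}^2}$ be real constants. The treatment is $D=1\{V\geq v_{GT}\}$ and the potential treatments are $D(t)=1\{V\geq v_{Gt}\}$, $t\in\{0,1\}$, so that $D=D(T)$. The observed outcome is $Y=DY(1)+(1-D)Y(0)$. For any random variable $R$, $R_{gt}$ denotes a random variable distributed as $R$ conditional on $\{G=g,T=t\}$ and $R_{dgt}$ one distributed as $R$ conditional on $\{D=d,G=g,T=t\}$. Let $S=\{D(0)<D(1),\,G=1\}$ and $\Delta=E(Y(1)-Y(0)\mid S,T=1)$. Assumption 1: $D=1\{V\geq v_{GT}\}$ with $V$ independent of $T$ conditional on $G$. Assumption 2: $E(D_{11})>E(D_{10})$ and $E(D_{11})-E(D_{10})>E(D_{01})-E(D_{00})$. Assumption 3: $E(Y(0)\mid G,T=1)-E(Y(0)\mid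 G,T=0)$ does not depend on $G$. Assumption 5: $0<E(D_{01})=E(D_{00})<1$. For any random variable $R$, $DID_R=E(R_{11})-E(R_{10})-\big(E(R_{01})-E(R_{00})\big)$, and $W_{DID}=DID_Y/DID_D$. *)

(* Defs.v *)
(* Every genuine
   probability space (events = measurable sets, integrable = L^1, E = Lebesgue
   integral) is an instance, so the theorem below generalizes the paper's. *)
From Stdlib Require Import Reals ClassicalDescription.
Open Scope R_scope.

Definition ind {O : Type} (A : O -> Prop) (w : O) : R :=
  if excluded_middle_informative (A w) then 1 else 0.

Record ProbSpace := mkPS {
  Omega : Type;
  event : (Omega -> Prop) -> Prop;
  integrable : (Omega -> R) -> Prop;
  E : (Omega -> R) -> R;
  event_full : event (fun _ => True);
  event_compl : forall A, event A -> event (fun w => ~ A w);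
  event_cunion : forall A : nat -> Omega -> Prop,
      (forall n, event (A n)) -> event (fun w => exists n, A n w);
  integrable_ind : forall A, event A -> integrable (ind A);
  integrable_add : forall f g, integrable f -> integrable g ->
      integrable (fun w => f w + g w);
  integrable_scal : forall (c : R) f, integrable f -> integrable (fun w => c * f w);
  integrable_mul_ind : forall A f, event A -> integrable f ->
      integrable (fun w => ind A w * f w);
  E_add : forall f g, integrable f -> integrable g ->
      E (fun w => f w + g w) = E f + E g;
  E_scal : forall (c : R) f, integrable f -> E (fun w => c * f w) = c * E f;
  E_mono : forall f g, integrable f -> integrable g ->
      (forall w, f w <= g w) -> E f <= E g;
  E_one : E (fun _ => 1) = 1;
  E_null : forall N f, event N -> E (ind N) = 0 -> integrable f ->
      E (fun w => ind N w * f w) = 0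
}.

Arguments event {p} _.
Arguments integrable {p} _.
Arguments E {p} _.

Inductive Borel : (R -> Prop) -> Prop :=
  | Borel_ge : forall c, Borel (fun x => c <= x)
  | Borel_compl : forall B, Borel B -> Borel (fun x => ~ B x)
  | Borel_cunion : forall B : nat -> R -> Prop,
      (forall n, Borel (B n)) -> Borel (fun x => exists n, B n x)
  | Borel_ext : forall B B', Borel B -> (forall x, B x <-> B' x) -> Borel B'.

Section Defs.
Context {P : ProbSpace}.

Definition Pr (A : Omega P -> Prop) : R := E (ind A).

(** E(X | A) = E(X 1_A) / P(A)  (Stdlib convention / 0 = 0). *)
Definition CE (X : Omega P -> R) (A : Omega P -> Prop) : R :=
  E (fun w => ind A w * X w) / Pr A.

(** The cell {G = g, T = t}; the group/period values 0,1 are encoded as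
    false,true. *)
Definition cell (G T : Omega P -> bool) (g t : bool) : Omega P -> Prop :=
  fun w => G w = g /\ T w = t.

Definition DID (G T : Omega P -> bool) (X : Omega P -> R) : R :=
  CE X (cell G T true true) - CE X (cell G T true false)
  - (CE X (cell G T false true) - CE X (cell G T false false)).

Definition Dtreat (V : Omega P -> R) (G T : Omega P -> bool) (v : bool -> bool -> R)
  : Omega P -> R := ind (fun w => v (G w) (T w) <= V w).

Definition Dpot (V : Omega P -> R) (G : Omega P -> bool) (v : bool -> bool -> R)
  (t : bool) : Omega P -> R := ind (fun w => v (G w) t <= V w).

Definition Yobs (Y0 Y1 : Omega P -> R) (D : Omega P -> R) : Omega P -> R :=
  fun w => D w * Y1 w + (1 - D w) * Y0 w.

(** V independent of T conditional on G (for discrete G, T):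
    P(V in B, T = t | G = g) = P(V in B | G = g) P(T = t | G = g),
    written multiplicatively. *)
Definition cond_indep_V_T_given_G (V : Omega P -> R) (G T : Omega P -> bool) : Prop :=
  forall (B : R -> Prop) (g t : bool), Borel B ->
    Pr (fun w => B (V w) /\ T w = t /\ G w = g) * Pr (fun w => G w = g)
    = Pr (fun w => B (V w) /\ G w = g) * Pr (fun w => T w = t /\ G w = g).

End Defs.

(* Main.v *)
Require Import Defs.
From Stdlib Require Import Reals Lra ClassicalDescription FunctionalExtensionality PropExtensionality Classical.
Require Import Defs.
Open Scope R_scope.

Ltac dem := repeat match goal with |- context [excluded_middle_informative ?A] =>
  destruct (excluded_middle_informative A) end.
Ltac fin := first [ lra | (exfalso; intuition (try congruence; try lra))
                  | intuition (try congruence; try lra) ].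

Section Aux.
Context {P : ProbSpace}.

Lemma ind_ext (A B : Omega P -> Prop) : (forall w, A w <-> B w) -> ind A = ind B.
Proof. intro H. apply functional_extensionality; intro w. unfold ind.
 specialize (H w).
 destruct (excluded_middle_informative (A w)), (excluded_middle_informative (B w)); tauto. Qed.

Lemma Pr_ext (A B : Omega P -> Prop) : (forall w, A w <-> B w) -> Pr A = Pr B.
Proof. intro H; unfold Pr; rewrite (ind_ext A B H); reflexivity. Qed.

Lemma CE_ext X (A B : Omega P -> Prop) : (forall w, A w <-> B w) -> CE X A = CE X B.
Proof. intro H; unfold CE; rewrite (Pr_ext A B H), (ind_ext A B H); reflexivity. Qed.

Lemma E_ext (f g : Omega P -> R) : (forall w, f w = g w) -> E f = E g.
Proof. intro H; rewrite (functional_extensionality f g H); reflexivity. Qed.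

Lemma integrable_ext (f g : Omega P -> R) : integrable f -> (forall w, f w = g w) -> integrable g.
Proof. intros Hf H. rewrite <- (functional_extensionality f g H). exact Hf. Qed.

Lemma event_ext (A B : Omega P -> Prop) : event A -> (forall w, A w <-> B w) -> event B.
Proof. intros HA H. replace B with A; auto. apply functional_extensionality; intro w;
 apply propositional_extensionality; auto. Qed.

Lemma event_and (A B : Omega P -> Prop) : event A -> event B -> event (fun w => A w /\ B w).
Proof. intros HA HB.
 pose (F := fun n : nat => match n with O => fun w => ~ A w | _ => fun w => ~ B w end).
 assert (HF : forall n, event (F n)) by (intros [|n]; simpl; apply event_compl; auto).
 apply (event_ext _ _ (event_compl _ _ (event_cunion _ F HF))).
 intro w; split.
 - intro H. apply NNPP; intro H'. apply H. apply not_and_or in H'.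
   destruct H' as [H'|H']; [exists O|exists 1%nat]; exact H'.
 - intros [a b] [[|n] Hn]; simpl in Hn; auto.
Qed.

Lemma E_CE X (A : Omega P -> Prop) : event A -> integrable X ->
  E (fun w => ind A w * X w) = CE X A * Pr A.
Proof. intros HA HX. unfold CE. destruct (Req_dec (Pr A) 0) as [H0|H0].
 - rewrite H0, Rmult_0_r. apply (E_null _ A X HA H0 HX).
 - field; auto. Qed.

Lemma Pr_mono (A B : Omega P -> Prop) : event A -> event B -> (forall w, A w -> B w) -> Pr A <= Pr B.
Proof. intros HA HB H. unfold Pr. apply E_mono; try apply integrable_ind; auto.
 intro w; specialize (H w); unfold ind;
 destruct (excluded_middle_informative (A w)), (excluded_middle_informative (B w)); try lra.
 exfalso; auto. Qed.

Lemma ind_split (A B Cc : Omega P -> Prop) : (forall w, B w -> A w) ->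
  (forall w, Cc w <-> A w /\ ~ B w) -> forall w, ind A w = ind B w + ind Cc w.
Proof. intros H1 H2 w. specialize (H1 w); specialize (H2 w). unfold ind.
 destruct (excluded_middle_informative (A w)), (excluded_middle_informative (B w)),
   (excluded_middle_informative (Cc w)); try lra; exfalso; tauto. Qed.

Lemma E_split (A B Cc : Omega P -> Prop) X : event B -> event Cc -> integrable X ->
  (forall w, B w -> A w) -> (forall w, Cc w <-> A w /\ ~ B w) ->
  E (fun w => ind A w * X w) = E (fun w => ind B w * X w) + E (fun w => ind Cc w * X w).
Proof. intros HB HC HX H1 H2.
 rewrite <- E_add by (apply integrable_mul_ind; auto). apply E_ext; intro w.
 rewrite (ind_split A B Cc H1 H2 w); ring. Qed.

Lemma Pr_split (A B Cc : Omega P -> Prop) : event B -> event Cc ->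
  (forall w, B w -> A w) -> (forall w, Cc w <-> A w /\ ~ B w) ->
  Pr A = Pr B + Pr Cc.
Proof. intros HB HC H1 H2. unfold Pr.
 rewrite <- E_add by (apply integrable_ind; auto). apply E_ext; intro w.
 apply ind_split; auto. Qed.

Lemma E_null_sub (A B : Omega P -> Prop) X : event A -> event B -> integrable X ->
  (forall w, B w -> A w) -> Pr A = Pr B ->
  E (fun w => ind A w * X w) = E (fun w => ind B w * X w).
Proof. intros HA HB HX H1 H2.
 set (Cc := fun w => A w /\ ~ B w).
 assert (HC : event Cc) by (apply event_and; auto; apply event_compl; auto).
 assert (H3 : forall w, Cc w <-> A w /\ ~ B w) by (intro; unfold Cc; tauto).
 rewrite (E_split A B Cc X HB HC HX H1 H3).
 pose proof (Pr_split A B Cc HB HC H1 H3) as H4.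
 rewrite (E_null _ Cc X HC); [ring | | auto]. unfold Pr in *; lra. Qed.

End Aux.

Lemma div_eq (x a y b : R) : x * b = y * a -> a <> 0 -> b <> 0 -> x / a = y / b.
Proof. intros H Ha Hb. replace (x/a) with (x*b/(a*b)) by (field; auto). rewrite H. field; auto. Qed.

Theorem mainTheorem2
  (P : ProbSpace) (Y0 Y1 V : Omega P -> R) (G T : Omega P -> bool)
  (v : bool -> bool -> R)
  (* measurability of G, T, V and finiteness of expectations *)
  (HGm : event (fun w => G w = true))
  (HTm : event (fun w => T w = true))
  (HVm : forall c, event (fun w => c <= V w))
  (HY0 : integrable Y0) (HY1 : integrable Y1)
  (* all four (group, period) cells have positive probability *)
  (Hcell : forall g t, 0 < Pr (cell G T g t))
  (* Assumption 1 (D = 1{V >= v_GT} is built in via Dtreat) *)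
  (A1 : cond_indep_V_T_given_G V G T)
  (* Assumption 2 *)
  (A2a : CE (Dtreat V G T v) (cell G T true true) > CE (Dtreat V G T v) (cell G T true false))
  (A2b : CE (Dtreat V G T v) (cell G T true true) - CE (Dtreat V G T v) (cell G T true false)
         > CE (Dtreat V G T v) (cell G T false true) - CE (Dtreat V G T v) (cell G T false false))
  (* Assumption 3 *)
  (A3 : CE Y0 (cell G T true true) - CE Y0 (cell G T true false)
        = CE Y0 (cell G T false true) - CE Y0 (cell G T false false))
  (* Assumption 5 *)
  (A5a : 0 < CE (Dtreat V G T v) (cell G T false true))
  (A5b : CE (Dtreat V G T v) (cell G T false true) = CE (Dtreat V G T v) (cell G T false false))
  (A5c : CE (Dtreat V G T v) (cell G T false true) < 1) :
  let D := Dtreat V G T v in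
  let Y := Yobs Y0 Y1 D in
  let TE := fun w => Y1 w - Y0 w in
  let S := fun w => Dpot V G v false w < Dpot V G v true w /\ G w = true in
  let Delta := CE TE (fun w => S w /\ T w = true) in
  let p := fun g t => CE D (cell G T g t) in
  let Dlt := fun g t =>
    CE TE (fun w => cell G T g t w /\ Dpot V G v false w = 1) in
  DID G T Y / DID G T D
  = Delta + ((Dlt true true - Dlt true false) * p true false
             - (Dlt false true - Dlt false false) * p false false) / DID G T D.
Proof.
  intros D Y TE S Delta p Dlt.
  assert (Ep : forall g t, p g t = CE (Dtreat V G T v) (cell G T g t)) by reflexivity.
  repeat (rewrite <- (Ep true true) in *); repeat (rewrite <- (Ep true false) in *); repeat (rewrite <- (Ep false true) in *); repeat (rewrite <- (Ep false false) in *).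
  assert (HG : forall g, event (fun w => G w = g)).
  { intros [|]; auto. apply (event_ext _ _ (event_compl _ _ HGm)).
    intro w; destruct (G w); intuition discriminate. }
  assert (HT : forall t, event (fun w => T w = t)).
  { intros [|]; auto. apply (event_ext _ _ (event_compl _ _ HTm)).
    intro w; destruct (T w); intuition discriminate. }
  assert (HC : forall g t, event (cell G T g t)) by (intros; exact (event_and _ _ (HG g) (HT t))).
  pose (Cv := fun g t c => fun w => (G w = g /\ T w = t) /\ c <= V w).
  assert (HCv : forall g t c, event (Cv g t c)) by (intros; exact (event_and _ _ (HC g t) (HVm c))).
  assert (HTE : integrable TE).
  { apply (integrable_ext (fun w => Y1 w + (-1) * Y0 w)).
    apply integrable_add; auto; apply integrable_scal; auto. intro w; unfold TE; ring. }
  assert (HPc : forall g t, Pr (cell G T g t) <> 0) by (intros g t; specialize (Hcell g t); lra).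
  assert (Hq : forall g t c, Pr (Cv g t c) / Pr (cell G T g t)
            = Pr (fun w => c <= V w /\ G w = g) / Pr (fun w => G w = g)).
  { intros g t c.
    assert (HPG : 0 < Pr (fun w => G w = g)).
    { apply Rlt_le_trans with (Pr (cell G T g t)); auto. apply Pr_mono; auto.
      intros w [H _]; exact H. }
    pose proof (A1 (fun x => c <= x) g t (Borel_ge c)) as H. cbv beta in H.
    rewrite (Pr_ext (fun w => c <= V w /\ T w = t /\ G w = g) (Cv g t c)) in H
      by (intro w; unfold Cv; tauto).
    rewrite (Pr_ext (fun w => T w = t /\ G w = g) (cell G T g t)) in H
      by (intro w; unfold cell; tauto).
    apply div_eq; auto. lra. }
  assert (Hq2 : forall g t t' c, Pr (Cv g t c) / Pr (cell G T g t)
                  = Pr (Cv g t' c) / Pr (cell G T g t')) by (intros; rewrite !Hq; reflexivity).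
  assert (Hp : forall g t, p g t = Pr (Cv g t (v g t)) / Pr (cell G T g t)).
  { intros g t. unfold p, CE. cbv beta. f_equal. unfold Pr. apply E_ext. intro w.
    unfold D, Dtreat, Cv, cell, ind. destruct g, t, (G w), (T w); dem; fin. }
  assert (HY : forall g t, CE Y (cell G T g t) = CE Y0 (cell G T g t)
            + E (fun w => ind (Cv g t (v g t)) w * TE w) / Pr (cell G T g t)).
  { intros g t. unfold CE.
    assert (E1 : E (fun w => ind (cell G T g t) w * Y w) =
      E (fun w => ind (cell G T g t) w * Y0 w) + E (fun w => ind (Cv g t (v g t)) w * TE w)).
    { rewrite <- E_add by (apply integrable_mul_ind; auto). apply E_ext; intro w.
      unfold Y, Yobs, D, Dtreat, TE, Cv, cell, ind. cbv beta.
      destruct g, t, (G w), (T w); dem; fin. }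
    rewrite E1. field; apply HPc. }
  assert (HDl : forall g t, Dlt g t = CE TE (Cv g t (v g false))).
  { intros g t. unfold Dlt. apply CE_ext. intro w.
    unfold Cv, cell, Dpot, ind. destruct g, t, (G w), (T w); dem; fin. }
  pose (SS := fun w => Cv true true (v true true) w /\ ~ Cv true true (v true false) w).
  assert (HSS : event SS) by (apply event_and; auto; apply event_compl; auto).
  assert (HDelta : Delta = CE TE SS).
  { unfold Delta. apply CE_ext. intro w. unfold S, SS, Cv, Dpot, ind. cbv beta.
    destruct (G w), (T w); dem; fin. }
  assert (Hv1 : v true true <= v true false).
  { destruct (Rle_dec (v true true) (v true false)) as [h|h]; auto. exfalso.
    assert (H : Pr (Cv true true (v true true)) <= Pr (Cv true true (v true false))).
    { apply Pr_mono; auto. intros w [Hc Hv]; split; auto; lra. }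
    assert (H0 : Pr (Cv true true (v true true)) / Pr (cell G T true true)
                 <= Pr (Cv true true (v true false)) / Pr (cell G T true true)).
    { unfold Rdiv; apply Rmult_le_compat_r; auto.
      left; apply Rinv_0_lt_compat; auto. }
    rewrite (Hq2 true true false (v true false)) in H0. rewrite <- !Hp in H0. lra. }
  assert (M11 : E (fun w => ind (Cv true true (v true true)) w * TE w)
     = E (fun w => ind (Cv true true (v true false)) w * TE w) + E (fun w => ind SS w * TE w)).
  { apply E_split; auto.
    - intros w [Hc Hv]; split; auto; lra.
    - intro w; unfold SS; tauto. }
  assert (PS : Pr (Cv true true (v true true)) = Pr (Cv true true (v true false)) + Pr SS).
  { apply Pr_split; auto.
    - intros w [Hc Hv]; split; auto; lra.
    - intro w; unfold SS; tauto. }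
  assert (Peq : Pr (Cv false true (v false true)) = Pr (Cv false true (v false false))).
  { pose proof (Hp false true) as h1; pose proof (Hp false false) as h2.
    pose proof (Hq2 false true false (v false false)) as h3.
    rewrite A5b in h1.
    assert (H : Pr (Cv false true (v false true)) / Pr (cell G T false true)
              = Pr (Cv false true (v false false)) / Pr (cell G T false true)).
    { rewrite <- h1, h3, <- h2. reflexivity. }
    apply (Rmult_eq_reg_r (/ Pr (cell G T false true))); [exact H|].
    apply Rinv_neq_0_compat; auto. }
  assert (M01 : E (fun w => ind (Cv false true (v false true)) w * TE w)
              = E (fun w => ind (Cv false true (v false false)) w * TE w)).
  { destruct (Rle_dec (v false false) (v false true)).
    - symmetry. apply E_null_sub; auto.
      intros w [Hc Hv]; split; auto; lra.
    - apply E_null_sub; auto.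
      intros w [Hc Hv]; split; auto; lra. }
  assert (ECv : forall g t c, E (fun w => ind (Cv g t c) w * TE w)
                 = CE TE (Cv g t c) * Pr (Cv g t c)) by (intros; apply E_CE; auto).
  assert (ESS : E (fun w => ind SS w * TE w) = CE TE SS * Pr SS) by (apply E_CE; auto).
  assert (P10 : Pr (Cv true false (v true false)) = p true false * Pr (cell G T true false))
    by (rewrite Hp; field; auto).
  assert (P00 : Pr (Cv false false (v false false)) = p false false * Pr (cell G T false false))
    by (rewrite Hp; field; auto).
  assert (P01 : Pr (Cv false true (v false false)) = p false false * Pr (cell G T false true)).
  { rewrite Hp, <- (Hq2 false true false). field; auto. }
  assert (P11 : Pr (Cv true true (v true false)) = p true false * Pr (cell G T true true)).
  { rewrite Hp, <- (Hq2 true true false). field; auto. }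
  assert (PSS : Pr SS = p true true * Pr (cell G T true true) - p true false * Pr (cell G T true true)).
  { rewrite <- P11. rewrite (Hp true true). field_simplify; [|auto]. lra. }
  unfold DID.
  assert (Ed : forall g t, CE D (cell G T g t) = p g t) by reflexivity.
  rewrite !Ed, !HY, !HDl, HDelta, M11, M01, !ECv, ESS, P10, P00, P01, P11, PSS, A5b.
  assert (A3' : CE Y0 (cell G T true true) = CE Y0 (cell G T true false)
     + CE Y0 (cell G T false true) - CE Y0 (cell G T false false)) by lra.
  rewrite A3'.
  field. repeat split; auto. lra.
Qed.
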